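(* For every $n$-qubit raw quantum circuit $C$, $$\mathfrak G_n\circ[\![E(C)]\!]=[\![C]\!]\circ\mathfrak G_n .$$
   Context: Raw quantum circuits. These are terms generated from the following gates, with their numbers of wires: $H$ ($1$), $P(\varphi)$ ($1$, for each $\varphi\in\mathbb R$), $\mathrm{CNOT}$ ($2$), the scalar $s(\varphi)$ ($0$), the identity $\mathrm{id}$ ($1$), the swap $\mathrm{SW}$ ($2$) and the empty circuit ($0$). They are combined by $\circ$ (same number of wires) and $\otimes$ (stacking, the first factor on top). Their semantics $[\![C]\!]$ is a linear map on $\mathbb C^{\{0,1\}^n}$, with $[\![C_2\circ C_1]\!]=[\![C_2]\!][\![C_1]\!]$ and $[\![C_1\otimes C_2]\!]=[\![C_1]\!]\otimes[\![C_2]\!]$. On gates: - $H|x\rangle=\frac1{\sqrt2}(|0\rangle+(-1)^x|1\rangle)$; - $P(\varphi)|x\rangle=e^{ix\varphi}|x\rangle$; - $\mathrm{CNOT}|x,y\rangle=|x,x\oplus y\rangle$; - $\mathrm{SW}|x,y\rangle=|y,x\rangle$; - $s(\varphi)$ is multiplication by $e^{i\varphi}$; - $\mathrm{id}$ and the empty circuit are identities. Raw LOPP-circuits. These are terms generated from $\mathrm{ph}(\varphi)$ ($1$ mode), $\mathrm{bs}(\theta)$ ($2$ modes), $\mathrm{id}$ ($1$ mode), $\mathrm{sw}$ ($2$ modes) and the empty circuit, combined by $\circ$ and $\otimes$. Their semantics is a matrix on $\mathbb C^{m}$ ($m$ modes, basis $|0\rangle,\dots,|m-1\rangle$ from top to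 bottom), with $\otimes$ interpreted as direct sum and: - $[\![\mathrm{ph}(\varphi)]\!]=(e^{i\varphi})$; - $[\![\mathrm{bs}(\theta)]\!]=\begin{pmatrix}\cos\theta&i\sin\theta\\i\sin\theta&\cos\theta\end{pmatrix}$; - $[\![\mathrm{sw}]\!]=\begin{pmatrix}0&1\\1&0\end{pmatrix}$; - $[\![\mathrm{id}]\!]=(1)$. For a circuit $C$, $C^{\otimes 0}$ is empty and $C^{\otimes(m+1)}=C\otimes C^{\otimes m}$. Gray code. $G_0(0)=\epsilon$, and $G_n(k)=0G_{n-1}(k)$ if $k<2^{n-1}$, while $G_n(k)=1G_{n-1}(2^n-1-k)$ if $k\ge 2^{n-1}$. The map $\mathfrak G_n:\mathbb C^{2^n}\to\mathbb C^{\{0,1\}^n}$ is $|k\rangle\mapsto|G_n(k)\rangle$. Encoding. For each $k,n,\ell$, let $\sigma_{k,n,\ell}$ be a $2^{k+n+\ell}$-mode raw LOPP-circuit built only from $\mathrm{id}$ and $\mathrm{sw}$ such that $\mathfrak G\circ[\![\sigma_{k,n,\ell}]\!]\circ\mathfrak G^{-1}|x,y,z\rangle=|x,z,y\rangle$ for all $x\in\{0,1\}^k$, $y\in\{0,1\}^n$, $z\in\{0,1\}^\ell$ (here $\mathfrak G=\mathfrak G_{k+n+\ell}$). For an $n$-qubit raw circuit $C$, set $E(C)=E_{0,0}(C)$, where $E_{k,\ell}(C)$ is a $2^{k+n+\ell}$-mode circuit defined inductively by the following rules. - Compositions: - $E_{k,\ell}(C_1\otimes C_2)=E_{k+n_1,\ell}(C_2)\circ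 E_{k,\ell+n_2}(C_1)$, where $C_i$ has $n_i$ wires; - $E_{k,\ell}(C_2\circ C_1)=E_{k,\ell}(C_2)\circ E_{k,\ell}(C_1)$. - Structural gates and scalars: - $E_{k,\ell}(\mathrm{SW})=\sigma_{k,\ell,2}\circ\sigma_{k+\ell,1,1}\circ\sigma_{k,2,\ell}$; - $E_{k,\ell}(\text{empty})=\mathrm{id}^{\otimes2^{k+\ell}}$; - $E_{k,\ell}(\mathrm{id})=\mathrm{id}^{\otimes 2^{k+\ell+1}}$; - $E_{k,\ell}(s(\varphi))=\mathrm{ph}(\varphi)^{\otimes2^{k+\ell}}$. - When $k=\ell=0$: - $E_{0,0}(H)=(\mathrm{id}\otimes\mathrm{ph}(-\frac\pi2))\circ\mathrm{bs}(\frac\pi4)\circ(\mathrm{id}\otimes\mathrm{ph}(-\frac\pi2))$; - $E_{0,0}(P(\varphi))=\mathrm{id}\otimes\mathrm{ph}(\varphi)$; - $E_{0,0}(\mathrm{CNOT})=\mathrm{id}\otimes\mathrm{id}\otimes\mathrm{sw}$. - When $(k,\ell)\neq(0,0)$: - $E_{k,\ell}(H)=\sigma_{k,\ell,1}\circ B_H^{\otimes2^{k+\ell-1}}\circ\sigma_{k,1,\ell}$; - $E_{k,\ell}(P(\varphi))=\sigma_{k,\ell,1}\circ B_P^{\otimes 2^{k+\ell-1}}\circ\sigma_{k,1,\ell}$; - $E_{k,\ell}(\mathrm{CNOT})=\sigma_{k,\ell,2}\circ B_C^{\otimes 2^{k+\ell-1}}\circ\sigma_{k,2,\ell}$. Here: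 - $B_H=E_{0,0}(H)\otimes\big((\mathrm{ph}(-\frac\pi2)\otimes\mathrm{id})\circ\mathrm{bs}(\frac\pi4)\circ(\mathrm{ph}(-\frac\pi2)\otimes\mathrm{id})\big)$; - $B_P=\mathrm{id}\otimes\mathrm{ph}(\varphi)\otimes\mathrm{ph}(\varphi)\otimes\mathrm{id}$; - $B_C=\mathrm{id}\otimes\mathrm{id}\otimes\mathrm{sw}\otimes\mathrm{sw}\otimes\mathrm{id}\otimes\mathrm{id}$. *)

(* Defs.v *)
From mathcomp Require Import all_boot all_algebra.
From mathcomp Require Import complex.
From mathcomp Require Import reals trigo.
Set Implicit Arguments. Unset Strict Implicit. Unset Printing Implicit Defensive.
Import GRing.Theory Num.Theory.
Local Open Scope ring_scope.
Local Open Scope complex_scope.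

Section Defs.
Variable R : realType.
Local Notation C := R[i].

Definition cexpi (phi : R) : C := cos phi +i* sin phi.
Definition imagu : C := 0 +i* 1.

Inductive qcirc : Type :=
| QH : qcirc
| QP : R -> qcirc
| QCNOT : qcirc
| QScal : R -> qcirc
| QId : qcirc
| QSW : qcirc
| QEmpty : qcirc
| QComp : qcirc -> qcirc -> qcirc   (* QComp c2 c1 = c2 \circ c1 *)
| QTens : qcirc -> qcirc -> qcirc.  (* QTens c1 c2 = c1 \otimes c2, c1 on top *)

Fixpoint qwires (c : qcirc) : nat :=
  match c with
  | QH | QP _ | QId => 1
  | QCNOT | QSW => 2
  | QScal _ | QEmpty => 0
  | QComp _ c1 => qwires c1
  | QTens c1 c2 => (qwires c1 + qwires c2)%N
  end.

Fixpoint qwf (c : qcirc) : bool :=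
  match c with
  | QComp c2 c1 => [&& qwf c2, qwf c1 & qwires c2 == qwires c1]
  | QTens c1 c2 => qwf c1 && qwf c2
  | _ => true
  end.

(* Semantics: qsem c out inp is the matrix entry <out| [[c]] |inp>, for
   bit strings out, inp in {0,1}^n (n = qwires c); the first bit is the
   top wire. *)
Fixpoint qsem (c : qcirc) (out inp : seq bool) {struct c} : C :=
  match c with
  | QH => (Num.sqrt 2)^-1%:C *
          (if head false inp && head false out then -1 else 1)
  | QP phi => (out == inp)%:R * (if head false inp then cexpi phi else 1)
  | QCNOT => (out == [:: nth false inp 0;
                         nth false inp 0 (+) nth false inp 1])%:R
  | QScal phi => cexpi phi
  | QId | QEmpty => (out == inp)%:R
  | QSW => (out == [:: nth false inp 1; nth false inp 0])%:R
  | QComp c2 c1 =>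
      \sum_(t : (qwires c1).-tuple bool) qsem c2 out t * qsem c1 t inp
  | QTens c1 c2 =>
      qsem c1 (take (qwires c1) out) (take (qwires c1) inp) *
      qsem c2 (drop (qwires c1) out) (drop (qwires c1) inp)
  end.

Inductive lcirc : Type :=
| Lph : R -> lcirc
| Lbs : R -> lcirc
| Lid : lcirc
| Lsw : lcirc
| Lempty : lcirc
| Lcomp : lcirc -> lcirc -> lcirc   (* Lcomp c2 c1 = c2 \circ c1 *)
| Ltens : lcirc -> lcirc -> lcirc.  (* Ltens c1 c2 = c1 \otimes c2, c1 on top *)

Fixpoint lmodes (c : lcirc) : nat :=
  match c with
  | Lph _ | Lid => 1
  | Lbs _ | Lsw => 2
  | Lempty => 0
  | Lcomp _ c1 => lmodes c1
  | Ltens c1 c2 => (lmodes c1 + lmodes c2)%N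
  end.

Fixpoint lwf (c : lcirc) : bool :=
  match c with
  | Lcomp c2 c1 => [&& lwf c2, lwf c1 & lmodes c2 == lmodes c1]
  | Ltens c1 c2 => lwf c1 && lwf c2
  | _ => true
  end.

Fixpoint lperm_only (c : lcirc) : bool :=
  match c with
  | Lid | Lsw => true
  | Lcomp c2 c1 | Ltens c2 c1 => lperm_only c2 && lperm_only c1
  | _ => false
  end.

(* Semantics: lsem c i j is the (i,j) entry of the m x m matrix [[c]]
   (modes 0..m-1 from top to bottom); \otimes is the direct sum. *)
Fixpoint lsem (c : lcirc) (i j : nat) {struct c} : C :=
  match c with
  | Lph phi => ((i == 0) && (j == 0))%:R * cexpi phi
  | Lbs th => if ((i < 2) && (j < 2))%N then
                (if i == j then (cos th)%:C else imagu * (sin th)%:C)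
              else 0
  | Lsw => [&& (i < 2)%N, (j < 2)%N & i != j]%:R
  | Lid | Lempty => (i == j)%:R
  | Lcomp c2 c1 => \sum_(k < lmodes c1) lsem c2 i k * lsem c1 k j
  | Ltens c1 c2 =>
      if ((i < lmodes c1) && (j < lmodes c1))%N then lsem c1 i j
      else if ((lmodes c1 <= i) && (lmodes c1 <= j))%N then
        lsem c2 (i - lmodes c1)%N (j - lmodes c1)%N
      else 0
  end.

Fixpoint ltpow (c : lcirc) (m : nat) : lcirc :=
  match m with
  | 0 => Lempty
  | m'.+1 => Ltens c (ltpow c m')
  end.

End Defs.

Arguments Lid {R}. Arguments Lsw {R}. Arguments Lempty {R}.
Arguments QH {R}. Arguments QCNOT {R}. Arguments QId {R}. Arguments QSW {R}. Arguments QEmpty {R}.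

Fixpoint gray (n k : nat) : seq bool :=
  match n with
  | 0 => [::]
  | n'.+1 => if (k < 2 ^ n')%N then false :: gray n' k
             else true :: gray n' (2 ^ n - 1 - k)
  end.

Section Enc.
Variable R : realType.
Local Notation C := R[i].

(* matrix of \mathfrak G_n : C^{2^n} -> C^{{0,1}^n}, entry (x, k) *)
Definition graym (n : nat) (x : seq bool) (k : nat) : C := (x == gray n k)%:R.
(* matrix of \mathfrak G_n^{-1} : C^{{0,1}^n} -> C^{2^n}, entry (k, x)
   (the inverse of the bijection |k> |-> |G_n(k)>) *)
Definition graym_inv (n : nat) (k : nat) (x : seq bool) : C := (gray n k == x)%:R.

Definition sigma_spec (sigma : nat -> nat -> nat -> lcirc R) : Prop :=
  forall k n l : nat,
    [/\ lperm_only (sigma k n l), lwf (sigma k n l),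
        lmodes (sigma k n l) = (2 ^ (k + n + l))%N &
        forall (x : k.-tuple bool) (y : n.-tuple bool) (z : l.-tuple bool)
               (u : (k + n + l).-tuple bool),
          \sum_(a < (2 ^ (k + n + l))%N) \sum_(b < (2 ^ (k + n + l))%N)
             graym (k + n + l) u a * lsem (sigma k n l) a b *
             graym_inv (k + n + l) b (x ++ y ++ z)
          = (val u == x ++ z ++ y)%:R :> C].

Definition mpi2 : R := - (pi / 2).
Definition pi4 : R := pi / 4.

Definition EH00 : lcirc R :=
  Lcomp (Ltens Lid (Lph mpi2)) (Lcomp (Lbs pi4) (Ltens Lid (Lph mpi2))).
Definition BH : lcirc R :=
  Ltens EH00 (Lcomp (Ltens (Lph mpi2) Lid) (Lcomp (Lbs pi4) (Ltens (Lph mpi2) Lid))).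
Definition BP (phi : R) : lcirc R :=
  Ltens Lid (Ltens (Lph phi) (Ltens (Lph phi) Lid)).
Definition BC : lcirc R :=
  Ltens Lid (Ltens Lid (Ltens Lsw (Ltens Lsw (Ltens Lid Lid)))).

Variable sigma : nat -> nat -> nat -> lcirc R.

Fixpoint enc (k l : nat) (c : qcirc R) {struct c} : lcirc R :=
  match c with
  | QTens c1 c2 =>
      Lcomp (enc (k + qwires c1) l c2) (enc k (l + qwires c2) c1)
  | QComp c2 c1 => Lcomp (enc k l c2) (enc k l c1)
  | QSW => Lcomp (sigma k l 2) (Lcomp (sigma (k + l) 1 1) (sigma k 2 l))
  | QEmpty => ltpow Lid (2 ^ (k + l))
  | QId => ltpow Lid (2 ^ (k + l + 1))
  | QScal phi => ltpow (Lph phi) (2 ^ (k + l))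
  | QH => if (k == 0) && (l == 0) then EH00
          else Lcomp (sigma k l 1) (Lcomp (ltpow BH (2 ^ (k + l - 1))) (sigma k 1 l))
  | QP phi => if (k == 0) && (l == 0) then Ltens Lid (Lph phi)
          else Lcomp (sigma k l 1) (Lcomp (ltpow (BP phi) (2 ^ (k + l - 1))) (sigma k 1 l))
  | QCNOT => if (k == 0) && (l == 0) then Ltens Lid (Ltens Lid Lsw)
          else Lcomp (sigma k l 2) (Lcomp (ltpow BC (2 ^ (k + l - 1))) (sigma k 2 l))
  end%N.

Definition E (c : qcirc R) : lcirc R := enc 0 0 c.

End Enc.

(* Main.v *)
Require Import Defs.
From mathcomp Require Import all_boot all_algebra.
From mathcomp Require Import complex.
From mathcomp Require Import reals trigo.
From mathcomp Require Import zify ring all_order.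
Import Order.TTheory GRing.Theory Num.Theory.
Local Open Scope ring_scope.
Local Open Scope complex_scope.
Set Implicit Arguments. Unset Strict Implicit. Unset Printing Implicit Defensive.

Fixpoint rank (s : seq bool) : nat :=
  match s with
  | [::] => 0
  | b :: s' => if b then (2 * 2 ^ (size s') - 1 - rank s')%N else rank s'
  end.

Lemma rank_lt s : (rank s < 2 ^ size s)%N.
Proof.
elim: s => [|b s IH] //=; rewrite expnS.
have := expn_gt0 2 (size s); case: b; lia.
Qed.

Lemma size_gray n k : size (gray n k) = n.
Proof. by elim: n k => [|n IH] k //=; case: ifP => _ /=; rewrite IH. Qed.

Lemma gray_rank s : gray (size s) (rank s) = s.
Proof.
elim: s => [|b s IH] //=; have := rank_lt s; rewrite expnS.
case: b => H.
  have -> : (2 * 2 ^ size s - 1 - rank s < 2 ^ size s)%N = false by lia.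
  have -> : (2 * 2 ^ size s - 1 - (2 * 2 ^ size s - 1 - rank s) = rank s)%N by lia.
  by rewrite IH.
by rewrite H IH.
Qed.

Lemma rank_gray n k : (k < 2 ^ n)%N -> rank (gray n k) = k.
Proof.
elim: n k => [|n IH] k /=; first by case: k.
rewrite expnS => Hk; case: ifP => H /=; first by rewrite IH.
rewrite size_gray IH; lia.
Qed.

Lemma rank_inj s t : size s = size t -> rank s = rank t -> s = t.
Proof. by move=> Hs Hr; rewrite -(gray_rank s) -(gray_rank t) Hs Hr. Qed.

Definition par (s : seq bool) : bool := foldr addb false s.

Lemma rank_rcons s a : rank (rcons s a) = (2 * rank s + (par s (+) a))%N.
Proof.
elim: s => [|b s IH] /=; first by case: a.
rewrite size_rcons IH; have := rank_lt s; rewrite !expnS; case: b => /= H //.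
rewrite addNb; case: (par s (+) a) => /=; lia.
Qed.

Lemma par_rcons s a : par (rcons s a) = par s (+) a.
Proof. elim: s => [|b s IH] /=; first by rewrite addbF. by rewrite IH addbA. Qed.

Lemma odd_rank s : odd (rank s) = par s.
Proof.
elim/last_ind: s => [|s a _] //; rewrite rank_rcons oddD oddM /= par_rcons.
by case: (par s (+) a).
Qed.

Section Sums.
Variable R : realType.
Local Notation C := R[i].

Lemma rank_ltN N (t : N.-tuple bool) : (rank t < 2 ^ N)%N.
Proof. by rewrite -{2}(size_tuple t) rank_lt. Qed.

Definition rtup N (t : N.-tuple bool) : 'I_(2 ^ N) := Ordinal (rank_ltN t).

Definition gtup N (m : 'I_(2 ^ N)) : N.-tuple bool :=
  @Tuple N bool (gray N m) (introT eqP (size_gray N m)).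

Lemma sum_ord_tuple N (F : nat -> C) :
  \sum_(m < 2 ^ N) F m = \sum_(t : N.-tuple bool) F (rank t).
Proof.
rewrite (reindex (@rtup N)) //=.
exists (@gtup N) => t _.
  apply: val_inj => /=; rewrite -{1}(size_tuple t); exact: gray_rank.
by apply: val_inj => /=; rewrite rank_gray.
Qed.

Lemma sum_delta N (s : seq bool) (G : seq bool -> C) : size s = N ->
  \sum_(t : N.-tuple bool) (tval t == s)%:R * G (tval t) = G s.
Proof.
move=> Hs; have Hs' : size s == N by apply/eqP.
rewrite (bigD1 (Tuple Hs')) //= eqxx mul1r big1 ?addr0 // => t Ht.
case: eqP => [E|]; last by rewrite mul0r.
by case/eqP: Ht; apply: val_inj.
Qed.

Lemma eqE3 (a b c : seq bool) :
  (a == b)%:R * (b == c)%:R = (b == a)%:R * (a == c)%:R :> C.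
Proof.
case: (a =P b) => [->|H]; first by rewrite eqxx !mul1r.
by rewrite [b == a]eq_sym (introF eqP H) !mul0r.
Qed.

Lemma split3 k n (t : seq bool) :
  t = take k t ++ take n (drop k t) ++ drop (k + n) t.
Proof. by rewrite addnC -drop_drop !cat_take_drop. Qed.

Lemma eq_cat3 (x y z x' y' z' : seq bool) : size x = size x' -> size y = size y' ->
  (x ++ y ++ z == x' ++ y' ++ z') = [&& x == x', y == y' & z == z'].
Proof. by move=> H1 H2; rewrite eqseq_cat // eqseq_cat. Qed.

Lemma eq_split3 k n (t x y z : seq bool) : (k + n <= size t)%N ->
  size x = k -> size y = n ->
  (t == x ++ y ++ z) = [&& take k t == x, take n (drop k t) == y & drop (k + n) t == z].
Proof.
move=> Ht Hx Hy; rewrite {1}(split3 k n t) eq_cat3 //; rewrite size_takel ?size_drop; lia.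
Qed.

Lemma sum_mid k n l (x z : seq bool) (G : seq bool -> C) :
  size x = k -> size z = l ->
  \sum_(t : (k + n + l).-tuple bool)
     ((take k t == x) && (drop (k + n) t == z))%:R * G (take n (drop k t))
  = \sum_(y : n.-tuple bool) G y.
Proof.
move=> Hx Hz; symmetry.
transitivity (\sum_(y : n.-tuple bool) \sum_(t : (k + n + l).-tuple bool)
   (tval t == x ++ tval y ++ z)%:R * G (take n (drop k t))).
  apply: eq_bigr => y _.
  rewrite (sum_delta (fun s => G (take n (drop k s)))); last first.
    by rewrite !size_cat size_tuple Hx Hz addnA.
  by rewrite drop_size_cat // take_size_cat ?size_tuple.
rewrite exchange_big; apply: eq_bigr => t _ /=.
have Ht : size t = (k + n + l)%N by rewrite size_tuple.
have E : forall y : n.-tuple bool, (tval t == x ++ tval y ++ z) =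
   ((take k t == x) && (drop (k + n) t == z)) && (tval y == take n (drop k t)).
  move=> y; rewrite (@eq_split3 k n) ?size_tuple //; last lia.
  by rewrite [take n _ == _]eq_sym; do 3 case: (_ == _).
under eq_bigr => y _ do rewrite E.
rewrite -mulr_suml; congr (_ * _).
case: (_ && _); last by rewrite big1 // => y _; rewrite mul0r.
transitivity (\sum_(y : n.-tuple bool)
   (tval y == take n (drop k t))%:R * (fun _ : seq bool => 1 : C) (tval y)).
  by apply: eq_bigr => y _; rewrite mulr1.
have Hsz : size (take n (drop k t)) = n by rewrite size_takel // size_drop size_tuple; lia.
exact: (@sum_delta n (take n (drop k t)) (fun _ => 1) Hsz).
Qed.
End Sums.

Lemma gray_rankN N (t : N.-tuple bool) : gray N (rank t) = t.
Proof. by rewrite -{1}(size_tuple t) gray_rank. Qed.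

Section Conj.
Variable R : realType.
Local Notation C := R[i].

Lemma conj_entry N (L : lcirc R) (u w : seq bool) : size u = N -> size w = N ->
  \sum_(a < 2 ^ N) \sum_(b < 2 ^ N)
     graym R N u a * lsem L a b * graym_inv R N b w = lsem L (rank u) (rank w).
Proof.
move=> Hu Hw; rewrite (@sum_ord_tuple R N (fun a => \sum_(b < 2 ^ N) graym R N u a * lsem L a b * graym_inv R N b w)).
transitivity (\sum_(t : N.-tuple bool) (tval t == u)%:R *
   (fun s => lsem L (rank s) (rank w)) (tval t)); last exact: (@sum_delta R N u (fun s => lsem L (rank s) (rank w)) Hu).
apply: eq_bigr => t _.
rewrite (@sum_ord_tuple R N (fun b => graym R N u (rank t) * lsem L (rank t) b * graym_inv R N b w)).
transitivity (\sum_(t' : N.-tuple bool) (tval t' == w)%:R *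
   (fun s => (tval t == u)%:R * lsem L (rank t) (rank s)) (tval t')); last exact: (@sum_delta R N w (fun s => (tval t == u)%:R * lsem L (rank t) (rank s)) Hw).
apply: eq_bigr => t' _ /=.
rewrite /graym /graym_inv !gray_rankN [u == _]eq_sym.
by rewrite mulrC mulrA.
Qed.

Lemma lsem_comp N (A B : lcirc R) i j : lmodes B = (2 ^ N)%N ->
  lsem (Lcomp A B) i j = \sum_(t : N.-tuple bool) lsem A i (rank t) * lsem B (rank t) j.
Proof. by move=> HB /=; rewrite HB (@sum_ord_tuple R N (fun k => lsem A i k * lsem B k j)). Qed.

Variable sigma : nat -> nat -> nat -> lcirc R.
Hypothesis Hsigma : sigma_spec sigma.

Lemma sigma_modes k n l : lmodes (sigma k n l) = (2 ^ (k + n + l))%N.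
Proof. by case: (Hsigma k n l). Qed.

Lemma sigma_eq k n l (x y z u : seq bool) :
  size x = k -> size y = n -> size z = l -> size u = (k + n + l)%N ->
  lsem (sigma k n l) (rank u) (rank (x ++ y ++ z)) = (u == x ++ z ++ y)%:R.
Proof.
move=> Hx Hy Hz Hu.
case: (Hsigma k n l) => _ _ _ /(_ (Tuple (introT eqP Hx)) (Tuple (introT eqP Hy))
   (Tuple (introT eqP Hz)) (Tuple (introT eqP Hu))) /= <-.
by rewrite conj_entry // !size_cat Hx Hy Hz addnA.
Qed.

Lemma sigma_eq' k n l (x y z t : seq bool) :
  size x = k -> size y = n -> size z = l -> size t = (k + n + l)%N ->
  lsem (sigma k n l) (rank (x ++ z ++ y)) (rank t) = (t == x ++ y ++ z)%:R.
Proof.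
move=> Hx Hy Hz Ht.
rewrite {1}(split3 k n t) sigma_eq ?size_takel ?size_drop //; try lia.
rewrite eq_cat3 ?size_takel ?size_drop //; try lia.
rewrite (@eq_split3 k n) //; last lia.
  by rewrite (eq_sym x) (eq_sym z) (eq_sym y) [X in _ && X]andbC.
by rewrite !size_cat; lia.
Qed.
End Conj.

Section Pow.
Variable R : realType.
Local Notation C := R[i].

Lemma lmodes_ltpow (B : lcirc R) M : lmodes (ltpow B M) = (M * lmodes B)%N.
Proof. by elim: M => [|M IH] //=; rewrite IH mulSn. Qed.

Lemma lsem_ltpow (B : lcirc R) d M q q' r r' : lmodes B = d ->
  (q < M)%N -> (q' < M)%N -> (r < d)%N -> (r' < d)%N ->
  lsem (ltpow B M) (d * q + r) (d * q' + r') = (q == q')%:R * lsem B r r'.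
Proof.
move=> Hd; elim: M q q' => [|M IH] q q' // Hq Hq' Hr Hr' /=.
rewrite Hd; case: q Hq => [|q] Hq; case: q' Hq' => [|q'] Hq' /=.
- by rewrite !muln0 !add0n Hr Hr' mul1r.
- have -> : (d * q'.+1 + r' < d)%N = false by rewrite mulnS; lia.
  have -> : (d <= d * 0 + r)%N = false by rewrite muln0 add0n leqNgt Hr.
  by rewrite andbF mul0r.
- have -> : (d * q.+1 + r < d)%N = false by rewrite mulnS; lia.
  have -> : (d <= d * 0 + r')%N = false by rewrite muln0 add0n leqNgt Hr'.
  by rewrite andbF mul0r.
- have -> : (d * q.+1 + r < d)%N = false by rewrite mulnS; lia.
  have -> : (d <= d * q.+1 + r)%N = true by rewrite mulnS; lia.
  have -> : (d <= d * q'.+1 + r')%N = true by rewrite mulnS; lia.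
  have -> : (d * q.+1 + r - d = d * q + r)%N by rewrite mulnS; lia.
  have -> : (d * q'.+1 + r' - d = d * q' + r')%N by rewrite mulnS; lia.
  by rewrite IH // eqSS.
Qed.

Lemma lsem_ltpow1 (B : lcirc R) M i j : lmodes B = 1%N -> (i < M)%N -> (j < M)%N ->
  lsem (ltpow B M) i j = (i == j)%:R * lsem B 0 0.
Proof.
move=> H1 Hi Hj; have := @lsem_ltpow B 1 M i j 0 0 H1 Hi Hj isT isT.
by rewrite !mul1n !addn0.
Qed.
End Pow.

Lemma rank_eq (u w : seq bool) : size u = size w -> (rank u == rank w) = (u == w).
Proof.
move=> H; apply/eqP/eqP => [|-> //]; exact: rank_inj.
Qed.

Lemma rank_ltS (u : seq bool) N : size u = N -> (rank u < 2 ^ N)%N.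
Proof. by move=> <-; exact: rank_lt. Qed.

Section Main.
Variable R : realType.
Local Notation C := R[i].
Variable sigma : nat -> nat -> nat -> lcirc R.
Hypothesis Hsigma : sigma_spec sigma.

Lemma boolRM (a b : bool) : ((a && b)%:R : C) = a%:R * b%:R.
Proof. by case: a; case: b; rewrite /= ?mul1r ?mul0r. Qed.

Lemma natr_true : (true%:R : C) = 1. Proof. by []. Qed.
Lemma natr_false : (false%:R : C) = 0. Proof. by []. Qed.

Lemma neq_symF (s t : seq bool) : s != t -> (t == s) = false.
Proof. by rewrite eq_sym => /negPf. Qed.

Definition GEN (c : qcirc R) k l :=
  lmodes (enc sigma k l c) = (2 ^ (k + qwires c + l))%N /\
  forall x y z x' y' z' : seq bool, size x = k -> size x' = k ->
    size y = qwires c -> size y' = qwires c -> size z = l -> size z' = l ->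
    lsem (enc sigma k l c) (rank (x ++ y ++ z)) (rank (x' ++ y' ++ z'))
    = (x == x')%:R * (z == z')%:R * qsem c y y'.

Lemma gen_empty k l : GEN QEmpty k l.
Proof.
split=> [|x y z x' y' z' Hx Hx' Hy Hy' Hz Hz'] /=.
  by rewrite lmodes_ltpow muln1 addn0.
move: Hy Hy' => /= Hy Hy'; rewrite lsem_ltpow1 //; try (apply: rank_ltS; rewrite !size_cat; lia).
case: y Hy => // _; case: y' Hy' => // _.
rewrite rank_eq ?eq_cat3 //=; try (by rewrite Hx Hx'); last by rewrite !size_cat; lia.
by rewrite ?eqxx ?andbT boolRM !mulr1.
Qed.

Lemma gen_id k l : GEN QId k l.
Proof.
split=> [|x y z x' y' z' Hx Hx' Hy Hy' Hz Hz'] /=.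
  by rewrite lmodes_ltpow muln1 addnAC.
move: Hy Hy' => /= Hy Hy'; rewrite lsem_ltpow1 //; try (apply: rank_ltS; rewrite !size_cat; lia).
rewrite rank_eq ?eq_cat3 //=; try (by rewrite Hx Hx'); try (rewrite ?size_cat; lia).
by rewrite !boolRM mulr1 mulrA mulrAC.
Qed.

Lemma gen_scal phi k l : GEN (QScal phi) k l.
Proof.
split=> [|x y z x' y' z' Hx Hx' Hy Hy' Hz Hz'] /=.
  by rewrite lmodes_ltpow muln1 addn0.
move: Hy Hy' => /= Hy Hy'; rewrite lsem_ltpow1 //; try (apply: rank_ltS; rewrite !size_cat; lia).
case: y Hy => // _; case: y' Hy' => // _.
rewrite rank_eq ?eq_cat3 //=; try (by rewrite Hx Hx'); last by rewrite !size_cat; lia.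
by rewrite ?eqxx ?andbT boolRM !mul1r.
Qed.

Lemma gen_comp c2 c1 k l : qwires c2 = qwires c1 -> GEN c2 k l -> GEN c1 k l ->
  GEN (QComp c2 c1) k l.
Proof.
move=> Hw [M2 IH2] [M1 IH1]; split=> [|x y z x' y' z' Hx Hx' Hy Hy' Hz Hz'].
  by rewrite /= M1.
rewrite [qwires _]/= in Hy Hy'. rewrite [enc _ _ _ _]/=.
set n := qwires c1 in Hy Hy' M1 IH1 *.
rewrite (lsem_comp _ _ _ M1).
transitivity (\sum_(t : (k + n + l).-tuple bool)
  ((take k t == x) && (drop (k + n) t == z))%:R *
  (fun s => (x == x')%:R * (z == z')%:R * (qsem c2 y s * qsem c1 s y')) (take n (drop k t))).
  apply: eq_bigr => t _.
  have Ht : size t = (k + n + l)%N := size_tuple t.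
  have H1 : size (take k t) = k by rewrite size_takel // Ht; lia.
  have H2 : size (take n (drop k t)) = n by rewrite size_takel // size_drop Ht; lia.
  have H2' : size (take n (drop k t)) = qwires c2 by rewrite Hw.
  have H3 : size (drop (k + n) t) = l by rewrite size_drop Ht; lia.
  have Hy2 : size y = qwires c2 by rewrite Hw.
  rewrite (split3 k n t) IH2 ?IH1 //.
  rewrite -(split3 k n t) boolRM.
  set a := take k t; set b := drop (k + n) t; set m := take n (drop k t).
  have [<-|Ha] := eqVneq a x; last by rewrite !mul0r.
  have [<-|Hb] := eqVneq b z; last by rewrite !(mul0r, mulr0).
  ring.
have := @sum_mid R k n l x z (fun s => (x == x')%:R * (z == z')%:R * (qsem c2 y s * qsem c1 s y')) Hx Hz.
rewrite /= => ->.
by rewrite -mulr_sumr.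
Qed.

Lemma gen_tens c1 c2 k l : GEN c1 k (l + qwires c2) -> GEN c2 (k + qwires c1) l ->
  GEN (QTens c1 c2) k l.
Proof.
move=> [M1 IH1] [M2 IH2]; split=> [|x y z x' y' z' Hx Hx' Hy Hy' Hz Hz'].
  by rewrite /= M1; congr (2 ^ _)%N; lia.
rewrite [qwires _]/= in Hy Hy'.
rewrite [enc _ _ _ _]/= [qsem _ y y']/= (lsem_comp _ _ _ M1).
set n1 := qwires c1 in Hy Hy' M1 IH1 IH2 *.
set n2 := qwires c2 in Hy Hy' M1 IH1 IH2 *.
have E1 : x ++ y ++ z = (x ++ take n1 y) ++ drop n1 y ++ z by rewrite -catA (catA (take n1 y)) cat_take_drop.
have E2 : x' ++ y' ++ z' = x' ++ take n1 y' ++ (drop n1 y' ++ z').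
  by rewrite (catA (take n1 y')) cat_take_drop.
rewrite E1 E2.
have Hy1 : size (take n1 y) = n1 by rewrite size_takel // Hy; lia.
have Hy1' : size (take n1 y') = n1 by rewrite size_takel // Hy'; lia.
have Hy2 : size (drop n1 y) = n2 by rewrite size_drop Hy; lia.
have Hy2' : size (drop n1 y') = n2 by rewrite size_drop Hy'; lia.
set y1 := take n1 y in Hy1 *; set y2 := drop n1 y in Hy2 *.
set y1' := take n1 y' in Hy1' *; set y2' := drop n1 y' in Hy2' *.
set s0 := x ++ y1 ++ y2' ++ z'.
have Hs0 : size s0 = (k + n1 + (l + n2))%N by rewrite /s0 !size_cat; lia.
transitivity (\sum_(t : (k + n1 + (l + n2)).-tuple bool) (tval t == s0)%:R *
  (fun _ => (x == x')%:R * (z == z')%:R * (qsem c1 y1 y1' * qsem c2 y2 y2')) (tval t)).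
  apply: eq_bigr => t _ /=.
  have Ht : size t = (k + n1 + (l + n2))%N := size_tuple t.
  case: (tval t =P s0) => [Et|Nt].
    rewrite Et {1}/s0 (catA x y1) IH2 ?size_cat ?Hx ?Hy1 ?Hz //.
    rewrite /s0 IH1 //; try (rewrite size_cat; lia).
    rewrite !eqxx !natr_true; ring.
  have Sa : size (take (k + n1) t) = (k + n1)%N by rewrite size_takel // Ht; lia.
  have Sb : size (take n2 (drop (k + n1) t)) = n2 by rewrite size_takel // size_drop Ht; lia.
  have Sc : size (drop (k + n1 + n2) t) = l by rewrite size_drop Ht; lia.
  have Sa' : size (take k t) = k by rewrite size_takel // Ht; lia.
  have Sb' : size (take n1 (drop k t)) = n1 by rewrite size_takel // size_drop Ht; lia.
  have Sc' : size (drop (k + n1) t) = (l + n2)%N by rewrite size_drop Ht; lia.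
  have A := IH2 (x ++ y1) y2 z _ _ _ (etrans (size_cat _ _) (congr2 addn Hx Hy1)) Sa Hy2 Sb Hz Sc.
  rewrite -(split3 (k + n1) n2 t) in A; rewrite A.
  have Sz : size (y2' ++ z') = (l + n2)%N by rewrite size_cat; lia.
  have B := IH1 _ _ _ x' y1' (y2' ++ z') Sa' Hx' Sb' Hy1' Sc' Sz.
  rewrite -(split3 k n1 t) in B; rewrite B.
  case: (x ++ y1 =P take (k + n1) t) => [Ea|]; last by rewrite !mul0r.
  case: (drop (k + n1) t =P y2' ++ z') => [Eb|]; last by rewrite !(mul0r, mulr0).
  by case: Nt; rewrite -(cat_take_drop (k + n1) t) -Ea Eb /s0 catA.
have := @sum_delta R _ s0 (fun _ => (x == x')%:R * (z == z')%:R * (qsem c1 y1 y1' * qsem c2 y2 y2')) Hs0.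
by rewrite /= => ->.
Qed.

Lemma gen_sw k l : GEN QSW k l.
Proof.
split=> [|x y z x' y' z' Hx Hx' Hy Hy' Hz Hz'].
  by rewrite /= sigma_modes.
rewrite [qwires _]/= in Hy Hy'.
have M1 := sigma_modes Hsigma k 2 l.
have M2 : lmodes (Lcomp (sigma (k + l) 1 1) (sigma k 2 l)) = (2 ^ (k + 2 + l))%N by [].
rewrite [enc _ _ _ _]/= (lsem_comp _ _ _ M2).
case: y' Hy' => [|a' [|b' []]] // _.
have Hs1 : size (x' ++ z' ++ [:: a'; b']) = (k + 2 + l)%N by rewrite !size_cat /=; lia.
have Hs2 : size (x ++ z ++ y) = (k + 2 + l)%N by rewrite !size_cat /=; lia.
transitivity (\sum_(t : (k + 2 + l).-tuple bool) ((tval t == x ++ z ++ y)%:R : C) *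
   (tval t == x' ++ z' ++ [:: b'; a'])%:R).
  apply: eq_bigr => t _.
  have Ht : size t = (k + 2 + l)%N := size_tuple t.
  rewrite (@sigma_eq' _ _ Hsigma k l 2) //; try (rewrite ?Ht; lia).
  congr (_ * _).
  rewrite (lsem_comp _ _ _ M1).
  transitivity (\sum_(t' : (k + 2 + l).-tuple bool) (tval t' == x' ++ z' ++ [:: a'; b'])%:R *
     lsem (sigma (k + l) 1 1) (rank t) (rank t')).
    apply: eq_bigr => t' _.
    by rewrite (@sigma_eq _ _ Hsigma k 2 l) ?size_tuple // mulrC.
  have := @sum_delta R _ _ (fun s => lsem (sigma (k + l) 1 1) (rank t) (rank s)) Hs1.
  move=> ->.
  rewrite !catA (_ : [:: a'; b'] = [:: a'] ++ [:: b']) // (@sigma_eq _ _ Hsigma (k + l) 1 1) //; rewrite ?size_cat ?Ht; lia.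
have := @sum_delta R _ _ (fun s : seq bool => (s == x' ++ z' ++ [:: b'; a'])%:R : C) Hs2.
move=> ->.
rewrite eq_cat3 ?Hx ?Hx' ?Hz ?Hz' // !boolRM.
by rewrite mulrA.
Qed.
End Main.

Section Gates.
Variable R : realType.
Local Notation C := R[i].

Lemma ii : imagu R * imagu R = -1.
Proof. by rewrite /imagu; simpc. Qed.
Lemma cexpi_mpi2 : cexpi (mpi2 R) = - imagu R.
Proof. rewrite /cexpi /mpi2 cosN sinN cos_pihalf sin_pihalf /imagu. by simpc. Qed.
Lemma cos_pi4 : cos (pi4 R) = (Num.sqrt 2)^-1.
Proof. by rewrite /pi4 -atan1 cos_atan expr1n. Qed.
Lemma sin_pi4 : sin (pi4 R) = (Num.sqrt 2)^-1.
Proof.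
have := tan_piquarter R; rewrite /tan -/(pi4 R) cos_pi4 => H.
have H2 : (Num.sqrt (2:R))^-1 != 0 by rewrite invr_eq0 gt_eqF // sqrtr_gt0 ltr0n.
by rewrite -(divfK H2 (sin (pi4 R))) H mul1r.
Qed.

Definition Hp : lcirc R :=
  Lcomp (Ltens (Lph (mpi2 R)) Lid) (Lcomp (Lbs (pi4 R)) (Ltens (Lph (mpi2 R)) Lid)).

Ltac isolve s := first [ ring
  | (transitivity (s * (imagu R * imagu R)); [ring| rewrite ii; ring])
  | (transitivity (- s * (imagu R * imagu R)); [ring| rewrite ii; ring]) ].

Lemma EH00_entry i j : (i < 2)%N -> (j < 2)%N ->
  lsem (EH00 R) i j = ((Num.sqrt 2)^-1)%:C * (if (i == 1%N) && (j == 1%N) then -1 else 1).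
Proof.
case: i => [|[|i]] // _; case: j => [|[|j]] // _;
rewrite /EH00 /= !big_ord_recr !big_ord0 /= ?cexpi_mpi2 ?cos_pi4 ?sin_pi4;
set s := ((Num.sqrt 2)^-1)%:C; isolve s.
Qed.

Lemma Hp_entry i j : (i < 2)%N -> (j < 2)%N ->
  lsem Hp i j = ((Num.sqrt 2)^-1)%:C * (if (i == 0%N) && (j == 0%N) then -1 else 1).
Proof.
case: i => [|[|i]] // _; case: j => [|[|j]] // _;
rewrite /Hp /= !big_ord_recr !big_ord0 /= ?cexpi_mpi2 ?cos_pi4 ?sin_pi4;
set s := ((Num.sqrt 2)^-1)%:C; isolve s.
Qed.
End Gates.

Lemma rank_div2 p : rank p = (2 * (rank p %/ 2) + par p)%N.
Proof. by rewrite {1}(divn_eq (rank p) 2) modn2 odd_rank mulnC. Qed.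

Lemma eq_2q (q q' : nat) (b b' : bool) :
  (2 * q + b == 2 * q' + b')%N = (q == q') && (b == b').
Proof.
case: b; case: b' => /=; rewrite ?andbT ?andbF; try (apply/eqP; lia).
all: apply/eqP/eqP; lia.
Qed.

Lemma rank_cat1 p a :
  rank (p ++ [:: a]) = (4 * (rank p %/ 2) + (2 * par p + (par p (+) a)))%N.
Proof. by rewrite cats1 rank_rcons {1}rank_div2; lia. Qed.

Lemma rank_cat2 p a b :
  rank (p ++ [:: a; b]) =
  (8 * (rank p %/ 2) + (4 * par p + 2 * (par p (+) a) + (par p (+) a (+) b)))%N.
Proof.
have -> : p ++ [:: a; b] = rcons (rcons p a) b by rewrite -!cats1 -catA.
by rewrite !rank_rcons par_rcons {1}rank_div2; lia.
Qed.

Section Block.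
Variable R : realType.
Local Notation C := R[i].

Lemma block_gen (B : lcirc R) d M m n (f : bool -> seq bool -> nat)
    (Q : seq bool -> seq bool -> C) :
  lmodes B = d -> (2 ^ m = 2 * M)%N ->
  (forall p y, size y = n -> rank (p ++ y) = d * (rank p %/ 2) + f (par p) y)%N ->
  (forall pi y, size y = n -> f pi y < d)%N ->
  (forall pi pi' y y', size y = n -> size y' = n ->
     lsem B (f pi y) (f pi' y') = (pi == pi')%:R * Q y y') ->
  forall p p' y y', size p = m -> size p' = m -> size y = n -> size y' = n ->
  lsem (ltpow B M) (rank (p ++ y)) (rank (p' ++ y')) = (p == p')%:R * Q y y'.
Proof.
move=> HB HM Hr Hf HQ p p' y y' Hp Hp' Hy Hy'.
have Hq : forall s : seq bool, size s = m -> (rank s %/ 2 < M)%N.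
  by move=> s Hs; rewrite ltn_divLR // mulnC -HM -Hs rank_lt.
rewrite !Hr // lsem_ltpow ?Hq ?Hf // HQ // mulrA -boolRM.
congr (_ * _); rewrite -(@rank_eq p p') ?Hp ?Hp' //.
by rewrite [in RHS](rank_div2 p) [in RHS](rank_div2 p') eq_2q.
Qed.
End Block.

Arguments EH00 : simpl never.
Arguments Hp : simpl never.

Section GateBlocks.
Variable R : realType.
Local Notation C := R[i].

Lemma lsem_tens (A B : lcirc R) i j : lsem (Ltens A B) i j =
  if ((i < lmodes A) && (j < lmodes A))%N then lsem A i j
  else if ((lmodes A <= i) && (lmodes A <= j))%N then
    lsem B (i - lmodes A)%N (j - lmodes A)%N else 0.
Proof. by []. Qed.

Lemma lmodes_EH00 : lmodes (EH00 R) = 2%N. Proof. by []. Qed.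

Definition f1 (pi : bool) (y : seq bool) : nat :=
  let a := nth false y 0 in
  if pi then (if a then 2 else 3) else (if a then 1 else 0).

Lemma f1_lt pi y : (f1 pi y < 4)%N.
Proof. by rewrite /f1; case: pi; case: (nth false y 0). Qed.

Lemma rank_f1 p y : size y = 1%N -> rank (p ++ y) = (4 * (rank p %/ 2) + f1 (par p) y)%N.
Proof.
case: y => [|a []] //= _; rewrite rank_cat1 /f1 /=.
by case: (par p); case: a.
Qed.

Lemma BH_block pi pi' y y' : size y = 1%N -> size y' = 1%N ->
  lsem (BH R) (f1 pi y) (f1 pi' y') = (pi == pi')%:R * qsem QH y y'.
Proof.
case: y => [|a []] // _; case: y' => [|b []] // _.
rewrite (_ : BH R = Ltens (EH00 R) (Hp R)) // lsem_tens lmodes_EH00 /f1.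
move: (lsem (EH00 R)) (@EH00_entry R) (lsem (Hp R)) (@Hp_entry R) => e He h Hh.
by case: pi; case: pi'; case: a; case: b; rewrite /= ?He ?Hh //= ?mul1r ?mul0r.
Qed.

Lemma BP_block (phi : R) pi pi' y y' : size y = 1%N -> size y' = 1%N ->
  lsem (BP phi) (f1 pi y) (f1 pi' y') = (pi == pi')%:R * qsem (QP phi) y y'.
Proof.
case: y => [|a []] // _; case: y' => [|b []] // _.
by case: pi; case: pi'; case: a; case: b; rewrite /= ?mul1r ?mul0r ?mulr1.
Qed.

Definition f2 (pi : bool) (y : seq bool) : nat :=
  let a := nth false y 0 in let b := nth false y 1 in
  ((if pi then 4 else 0) + (if pi (+) a then 2 else 0) + (if pi (+) a (+) b then 1 else 0))%N.

Lemma f2_lt pi y : (f2 pi y < 8)%N.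
Proof. by rewrite /f2; case: pi; case: (nth false y 0); case: (nth false y 1). Qed.

Lemma rank_f2 p y : size y = 2%N -> rank (p ++ y) = (8 * (rank p %/ 2) + f2 (par p) y)%N.
Proof.
case: y => [|a [|b []]] //= _; rewrite rank_cat2 /f2 /=.
by case: (par p); case: a; case: b.
Qed.

Lemma BC_block pi pi' y y' : size y = 2%N -> size y' = 2%N ->
  lsem (BC R) (f2 pi y) (f2 pi' y') = (pi == pi')%:R * qsem QCNOT y y'.
Proof.
case: y => [|a [|b []]] // _; case: y' => [|c [|d []]] // _.
by case: pi; case: pi'; case: a; case: b; case: c; case: d; rewrite /= ?mul1r ?mul0r ?mulr1.
Qed.
End GateBlocks.

Section Main2.
Variable R : realType.
Local Notation C := R[i].
Variable sigma : nat -> nat -> nat -> lcirc R.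
Hypothesis Hsigma : sigma_spec sigma.

Lemma gen_block (L : lcirc R) n k l (Q : seq bool -> seq bool -> C) :
  (forall p p' y y', size p = (k + l)%N -> size p' = (k + l)%N -> size y = n ->
     size y' = n -> lsem L (rank (p ++ y)) (rank (p' ++ y')) = (p == p')%:R * Q y y') ->
  forall x y z x' y' z' : seq bool, size x = k -> size x' = k ->
    size y = n -> size y' = n -> size z = l -> size z' = l ->
  lsem (Lcomp (sigma k l n) (Lcomp L (sigma k n l))) (rank (x ++ y ++ z)) (rank (x' ++ y' ++ z'))
  = (x == x')%:R * (z == z')%:R * Q y y'.
Proof.
move=> HL x y z x' y' z' Hx Hx' Hy Hy' Hz Hz'.
have M1 := sigma_modes Hsigma k n l.
have M2 : lmodes (Lcomp L (sigma k n l)) = (2 ^ (k + n + l))%N by [].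
rewrite (lsem_comp _ _ _ M2).
have S1 : size (x ++ z ++ y) = (k + n + l)%N by rewrite !size_cat; lia.
have S2 : size (x' ++ z' ++ y') = (k + n + l)%N by rewrite !size_cat; lia.
transitivity (\sum_(t : (k + n + l).-tuple bool) (tval t == x ++ z ++ y)%:R *
  lsem (Lcomp L (sigma k n l)) (rank t) (rank (x' ++ y' ++ z'))).
  apply: eq_bigr => t _.
  by rewrite (@sigma_eq' _ _ Hsigma k l n) // size_tuple; lia.
have := @sum_delta R _ _ (fun s => lsem (Lcomp L (sigma k n l)) (rank s) (rank (x' ++ y' ++ z'))) S1.
move=> ->.
rewrite (lsem_comp _ _ _ M1).
transitivity (\sum_(t : (k + n + l).-tuple bool) (tval t == x' ++ z' ++ y')%:R *
  lsem L (rank (x ++ z ++ y)) (rank t)).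
  apply: eq_bigr => t _.
  by rewrite (@sigma_eq _ _ Hsigma k n l) ?size_tuple // mulrC.
have := @sum_delta R _ _ (fun s => lsem L (rank (x ++ z ++ y)) (rank s)) S2.
move=> ->.
rewrite !catA HL ?size_cat ?Hx ?Hx' ?Hz ?Hz' //.
by rewrite eqseq_cat ?Hx ?Hx' // boolRM.
Qed.
End Main2.

Section Main3.
Variable R : realType.
Local Notation C := R[i].
Variable sigma : nat -> nat -> nat -> lcirc R.
Hypothesis Hsigma : sigma_spec sigma.

Lemma rank1 a : rank [:: a] = a. Proof. by case: a. Qed.

Lemma pow_half k l (H : ~~ ((k == 0%N) && (l == 0%N))) :
  (2 ^ (k + l) = 2 * 2 ^ (k + l - 1))%N.
Proof. rewrite -expnS; congr (2 ^ _)%N; move: H; case: k => [|k]; case: l => [|l] //= _; lia. Qed.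

Lemma gen_H k l : GEN sigma QH k l.
Proof.
split=> [|x y z x' y' z' Hx Hx' Hy Hy' Hz Hz'].
  rewrite /=; case: ifP => [/andP[/eqP-> /eqP->]|_]; first by rewrite lmodes_EH00.
  exact: (sigma_modes Hsigma).
rewrite [enc _ _ _ _]/=; case: ifP => [/andP[/eqP Ek /eqP El]|Hkl].
  move: Hx Hx' Hz Hz'; rewrite Ek El; case: x => // _; case: x' => // _; case: z => // _; case: z' => // _.
  case: y Hy => [|a []] // _; case: y' Hy' => [|b []] // _.
  rewrite !cat0s !cats0 !rank1 EH00_entry; try by case: a; case: b.
  by rewrite !eqxx !natr_true !mul1r; case: a; case: b.
apply: (gen_block Hsigma) => // p p' u u' Hp Hp' Hu Hu'.
apply: (@block_gen R (BH R) 4 _ (k + l) 1 f1) => //.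
- by apply: pow_half; rewrite Hkl.
- by move=> ? ? H; apply: rank_f1 H.
- by move=> ? ? ?; apply: f1_lt.
- by move=> ? ? ? ? ? ?; apply: BH_block.
Qed.

Lemma gen_P phi k l : GEN sigma (QP phi) k l.
Proof.
split=> [|x y z x' y' z' Hx Hx' Hy Hy' Hz Hz'].
  rewrite /=; case: ifP => [/andP[/eqP-> /eqP->]|_] //.
  exact: (sigma_modes Hsigma).
rewrite [enc _ _ _ _]/=; case: ifP => [/andP[/eqP Ek /eqP El]|Hkl].
  move: Hx Hx' Hz Hz'; rewrite Ek El; case: x => // _; case: x' => // _; case: z => // _; case: z' => // _.
  case: y Hy => [|a []] // _; case: y' Hy' => [|b []] // _.
  by rewrite !cats0 !rank1; case: a; case: b; rewrite /= ?mul1r ?mul0r ?mulr1.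
apply: (gen_block Hsigma) => // p p' u u' Hp Hp' Hu Hu'.
apply: (@block_gen R (BP phi) 4 _ (k + l) 1 f1) => //.
- by apply: pow_half; rewrite Hkl.
- by move=> ? ? H; apply: rank_f1 H.
- by move=> ? ? ?; apply: f1_lt.
- by move=> ? ? ? ? ? ?; apply: BP_block.
Qed.

Lemma gen_CNOT k l : GEN sigma QCNOT k l.
Proof.
split=> [|x y z x' y' z' Hx Hx' Hy Hy' Hz Hz'].
  rewrite /=; case: ifP => [/andP[/eqP-> /eqP->]|_] //.
  exact: (sigma_modes Hsigma).
rewrite [enc _ _ _ _]/=; case: ifP => [/andP[/eqP Ek /eqP El]|Hkl].
  move: Hx Hx' Hz Hz'; rewrite Ek El; case: x => // _; case: x' => // _; case: z => // _; case: z' => // _.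
  case: y Hy => [|a [|b []]] // _; case: y' Hy' => [|c [|d []]] // _.
  by rewrite !cats0; case: a; case: b; case: c; case: d; rewrite /= ?mul1r ?mul0r ?mulr1.
apply: (gen_block Hsigma) => // p p' u u' Hp Hp' Hu Hu'.
apply: (@block_gen R (BC R) 8 _ (k + l) 2 f2) => //.
- by apply: pow_half; rewrite Hkl.
- by move=> ? ? H; apply: rank_f2 H.
- by move=> ? ? ?; apply: f2_lt.
- by move=> ? ? ? ? ? ?; apply: BC_block.
Qed.
End Main3.

Section Final.
Variable R : realType.
Local Notation C := R[i].
Variable sigma : nat -> nat -> nat -> lcirc R.
Hypothesis Hsigma : sigma_spec sigma.

Lemma gen_all (c : qcirc R) : qwf c -> forall k l, GEN sigma c k l.
Proof.
elim: c => [|phi||phi||||c2 IH2 c1 IH1|c1 IH1 c2 IH2] /= Hc k l.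
- exact: gen_H.
- exact: gen_P.
- exact: gen_CNOT.
- exact: gen_scal.
- exact: gen_id.
- exact: gen_sw.
- exact: gen_empty.
- case/and3P: Hc => H2 H1 /eqP Hw.
  by apply: gen_comp => //; [apply: IH2 | apply: IH1].
- case/andP: Hc => H1 H2.
  by apply: gen_tens; [apply: IH1 | apply: IH2].
Qed.
End Final.

Unset Implicit Arguments.

Theorem mainTheorem5 (R : realType) (sigma : nat -> nat -> nat -> lcirc R)
    (Hsigma : sigma_spec sigma) (c : qcirc R) (Hc : qwf c)
    (x : (qwires c).-tuple bool) (k : nat) (Hk : (k < 2 ^ qwires c)%N) :
  \sum_(j < 2 ^ qwires c) graym R (qwires c) x j * lsem (E sigma c) j k
  = \sum_(y : (qwires c).-tuple bool) qsem c x y * graym R (qwires c) y k.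
Proof.
set n := qwires c in x Hk *.
have Hx : size x = n := size_tuple x.
have Hg : size (gray n k) = n := size_gray n k.
rewrite (@sum_ord_tuple R n (fun j => graym R n x j * lsem (E sigma c) j k)).
transitivity (\sum_(t : n.-tuple bool) (tval t == x)%:R *
   (fun s => lsem (E sigma c) (rank s) k) (tval t)).
  by apply: eq_bigr => t _; rewrite /graym gray_rankN eq_sym.
rewrite (@sum_delta R n x (fun s => lsem (E sigma c) (rank s) k) Hx).
transitivity (\sum_(t : n.-tuple bool) (tval t == gray n k)%:R *
   (fun s => qsem c x s) (tval t)); last first.
  by apply: eq_bigr => t _; rewrite /graym mulrC.
rewrite (@sum_delta R n (gray n k) (fun s => qsem c x s) Hg) /=.
have [_ G] := gen_all Hsigma Hc 0 0.
have := G [::] x [::] [::] (gray n k) [::] erefl erefl Hx Hg erefl erefl.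
by rewrite cat0s !cats0 rank_gray // eqxx natr_true !mul1r.
Qed.
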